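(* Let $n=2^m\geq 8$. If $B\subseteq X^n$ is a set in which any two words are at Hamming distance at most $4$, then $|B|\leq n^2$. Moreover, there exists a set $B\subseteq X^n$ of diameter $4$ with $|B|=n^2$.
   Context: $X^n$ is the set of words of length $n$ over the alphabet $\{*,0,1\}$ containing exactly one symbol $*$. The Hamming distance between two words is the number of coordinates in which they differ; the diameter of a set is the maximum distance between two of its elements. *)

(* Defs.v *)
From mathcomp Require Import all_boot.
Set Implicit Arguments. Unset Strict Implicit. Unset Printing Implicit Defensive.

(* Alphabet {*,0,1}: encoded as option bool, with None = *, Some false = 0, Some true = 1. *)
Definition letter := option bool.

Definition word (n : nat) := {ffun 'I_n -> letter}.

Definition Xn (n : nat) : {set word n} :=
  [set w : word n | #|[set i | w i == None]| == 1].

Definition hdist (n : nat) (u v : word n) : nat := #|[set i | u i != v i]|.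

Definition diam (n : nat) (B : {set word n}) : nat :=
  \max_(u in B) \max_(v in B) hdist u v.

(* Main.v *)
Require Import Defs.
From mathcomp Require Import all_boot all_algebra all_field ring zify.
Set Implicit Arguments. Unset Strict Implicit. Unset Printing Implicit Defensive.

Section Basics.
Variable n : nat.

Definition trs (w : word n) : {set 'I_n} := [set k | w k == Some true].
Definition nones (w : word n) : {set 'I_n} := [set k | w k == None].
Definition mkw (i : 'I_n) (X : {set 'I_n}) : word n :=
  [ffun k => if k == i then None else Some (k \in X)].

Lemma nones_mkw (i : 'I_n) (X : {set 'I_n}) : nones (mkw i X) = [set i].
Proof. by apply/setP=> k; rewrite !inE /mkw ffunE; case: (k == i). Qed.

Lemma mkw_Xn (i : 'I_n) (X : {set 'I_n}) : mkw i X \in Xn n.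
Proof. by rewrite inE; have := nones_mkw i X; rewrite /nones => ->; rewrite cards1. Qed.

Lemma trs_mkw (i : 'I_n) (X : {set 'I_n}) : i \notin X -> trs (mkw i X) = X.
Proof.
move=> iX; apply/setP=> k; rewrite !inE /mkw ffunE.
by case: (k =P i) => [->|_]; [rewrite (negbTE iX)|case: (k \in X)].
Qed.

Lemma hdistC (u v : word n) : hdist u v = hdist v u.
Proof. by rewrite /hdist; apply: eq_card=> k; rewrite !inE eq_sym. Qed.

End Basics.

Section Existence.
Variable n : nat.
Hypothesis n4 : 4 <= n.

Definition fB (p : 'I_n * 'I_n) : word n :=
  mkw p.1 (if p.2 == p.1 then set0 else [set p.2]).

Lemma fB_inj : injective fB.
Proof.
move=> [i k] [j l] /= E.
have eij : i = j.
  have := congr1 (fun w : word n => w i) E; rewrite /fB /mkw !ffunE eqxx /=.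
  by case: eqP.
subst j.
have nin (a : 'I_n) : i \notin (if a == i then set0 else [set a]).
  by case: (a =P i) => [_|/eqP]; rewrite ?inE // eq_sym.
have := congr1 (@trs n) E; rewrite /fB /= !trs_mkw ?nin //.
case: (k =P i) => [->|/eqP ki]; case: (l =P i) => [->|/eqP li] //.
- by move/setP/(_ l); rewrite !inE eqxx.
- by move/setP/(_ k); rewrite !inE eqxx.
by move/setP/(_ k); rewrite !inE eqxx => /esym/eqP ->.
Qed.

Definition B0 : {set word n} := fB @: setT.

Lemma B0_card : #|B0| = n ^ 2.
Proof. by rewrite card_imset; [rewrite cardsT card_prod card_ord mulnn | exact: fB_inj]. Qed.

Lemma B0_sub : B0 \subset Xn n.
Proof. by apply/subsetP=> w /imsetP[p _ ->]; apply: mkw_Xn. Qed.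

Lemma B0_dist u v : u \in B0 -> v \in B0 -> hdist u v <= 4.
Proof.
move=> /imsetP[[i k] _ ->] /imsetP[[j l] _ ->].
rewrite /hdist.
apply: (@leq_trans #|[set i; j] :|: [set k; l]|).
  apply: subset_leq_card; apply/subsetP=> x; rewrite !inE; apply: contraLR.
  rewrite !negb_or => /andP[/andP[xi xj] /andP[xk xl]]; rewrite negbK.
  rewrite /fB /mkw !ffunE /= (negbTE xi) (negbTE xj).
  have h1 : x \in (if k == i then set0 else [set k]) = false.
    by case: (k == i); rewrite ?inE // (negbTE xk).
  have h2 : x \in (if l == j then set0 else [set l]) = false.
    by case: (l == j); rewrite ?inE // (negbTE xl).
  by rewrite h1 h2.
apply: (leq_trans (leq_card_setU _ _)).
by rewrite !cards2; case: (i != j); case: (k != l).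
Qed.

Lemma B0_diam : diam B0 = 4.
Proof.
apply/eqP; rewrite eqn_leq; apply/andP; split.
  apply/bigmax_leqP=> u uB; apply/bigmax_leqP=> v vB; exact: B0_dist.
have l0 : 0 < n by apply: leq_trans n4.
have l1 : 1 < n by apply: leq_trans n4.
have l2 : 2 < n by apply: leq_trans n4.
have l3 : 3 < n by [].
pose a0 := Ordinal l0; pose a1 := Ordinal l1; pose a2 := Ordinal l2; pose a3 := Ordinal l3.
have uB : fB (a0, a2) \in B0 by apply: imset_f.
have vB : fB (a1, a3) \in B0 by apply: imset_f.
apply: (leq_trans _ (leq_bigmax_cond _ uB)).
apply: (leq_trans _ (leq_bigmax_cond _ vB)).
rewrite /hdist.
have -> : 4 = #|[set x in [:: a0; a1; a2; a3]]|.
  by rewrite cardsE; apply/esym/card_uniqP.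
apply: subset_leq_card; apply/subsetP=> x; rewrite !inE.
by case/or4P=> /eqP ->; rewrite /fB /mkw !ffunE /= ?inE.
Qed.

End Existence.
Section Compression.
Variable n : nat.
Implicit Types (B : {set word n}) (u v w : word n).

Definition shift (k : 'I_n) (w : word n) : word n :=
  [ffun x => if (x == k) && (w x == Some true) then Some false else w x].
Definition sh B k w :=
  if (w k == Some true) && (shift k w \notin B) then shift k w else w.
Definition compr k B := [set sh B k w | w in B].
Definition wt B := \sum_(w in B) #|trs w|.
Definition pw4 B := forall u v, u \in B -> v \in B -> hdist u v <= 4.
Definition dclosed B := forall w k, w \in B -> w k = Some true -> shift k w \in B.

Lemma shift_Xn k w : w \in Xn n -> shift k w \in Xn n.
Proof.
suff E : [set i | shift k w i == None] = [set i | w i == None] by rewrite !inE E.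
apply/setP=> x; rewrite !inE /shift ffunE.
by case: (x =P k) => [->|] //=; case: (w k) => [[]|].
Qed.

Lemma trs_shift k w : trs (shift k w) = trs w :\ k.
Proof.
apply/setP=> x; rewrite !inE /shift ffunE.
by case: (x =P k) => [->|] //=; case: (w k) => [[]|].
Qed.

Lemma shift_inj k u v : u k = Some true -> v k = Some true ->
  shift k u = shift k v -> u = v.
Proof.
move=> uk vk /ffunP E; apply/ffunP=> x; have := E x; rewrite /shift !ffunE.
by case: (x =P k) => [->|] //=; rewrite uk vk.
Qed.

Lemma sh_inj k B : {in B &, injective (sh B k)}.
Proof.
move=> u v uB vB; rewrite /sh.
case: ifP => [/andP[uk uS]|uN]; case: ifP => [/andP[vk vS]|vN] E //.
- exact: shift_inj (eqP uk) (eqP vk) E.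
- by move: uS; rewrite E vB.
- by move: vS; rewrite -E uB.
Qed.

Lemma card_comp k B : #|compr k B| = #|B|.
Proof. by rewrite card_in_imset //; exact: sh_inj. Qed.

Lemma comp_Xn k B : B \subset Xn n -> compr k B \subset Xn n.
Proof.
move=> /subsetP BX; apply/subsetP=> w' /imsetP[w wB ->]; rewrite /sh.
by case: ifP => _; [apply: shift_Xn|]; apply: BX.
Qed.

Lemma hd_shift_le k u v : v k != Some true -> hdist (shift k u) v <= hdist u v.
Proof.
move=> vk; apply: subset_leq_card; apply/subsetP=> x; rewrite !inE /shift ffunE.
case: (x =P k) => [->|xk] /=; last by [].
case: (u k =P Some true) => [uk|nuk] //.
by rewrite uk => _; rewrite eq_sym.
Qed.

Lemma hd_shift2 k u v : u k = Some true -> v k = Some true ->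
  hdist (shift k u) (shift k v) = hdist u v.
Proof.
move=> uk vk; apply: eq_card=> x; rewrite !inE /shift !ffunE.
by case: (x =P k) => [->|] //=; rewrite uk vk.
Qed.

Lemma hd_shift_swap k u v : u k = Some true -> v k = Some true ->
  hdist (shift k u) v = hdist u (shift k v).
Proof.
move=> uk vk; apply: eq_card=> x; rewrite !inE /shift !ffunE.
by case: (x =P k) => [->|] //=; rewrite uk vk.
Qed.

Lemma comp_pw4 k B : pw4 B -> pw4 (compr k B).
Proof.
move=> H u' v' /imsetP[u uB ->] /imsetP[v vB ->]; rewrite /sh.
case: ifP => [/andP[/eqP uk uS]|uN]; case: ifP => [/andP[/eqP vk vS]|vN].
- by rewrite hd_shift2 //; apply: H.
- case: (v k =P Some true) => vk.
    have vS : shift k v \in B by apply/negPn; apply: contraFN vN => ->; rewrite vk eqxx.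
    by rewrite hd_shift_swap //; apply: H.
  by apply: leq_trans (H _ _ uB vB); apply: hd_shift_le; apply/eqP.
- case: (u k =P Some true) => uk.
    have uS : shift k u \in B by apply/negPn; apply: contraFN uN => ->; rewrite uk eqxx.
    by rewrite hdistC hd_shift_swap // hdistC; apply: H.
  by rewrite hdistC; apply: leq_trans (H _ _ vB uB); apply: hd_shift_le; apply/eqP.
- exact: H.
Qed.

Lemma wt_comp k B w : w \in B -> w k = Some true -> shift k w \notin B ->
  wt (compr k B) < wt B.
Proof.
move=> wB wk wS; rewrite /wt /compr big_imset /=; last exact: sh_inj.
rewrite (bigD1 w wB) [X in _ < X](bigD1 w wB) /=.
have -> : sh B k w = shift k w by rewrite /sh wk eqxx wS.
rewrite -addSn leq_add //.
  by rewrite trs_shift (cardsD1 k (trs w)) inE wk.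
apply: leq_sum=> v _; rewrite /sh; case: ifP => // _.
by rewrite trs_shift; apply: subset_leq_card; apply: subD1set.
Qed.

Lemma reduce (N : nat) :
  (forall B, B \subset Xn n -> pw4 B -> dclosed B -> #|B| <= N) ->
  forall B, B \subset Xn n -> pw4 B -> #|B| <= N.
Proof.
move=> Hdc B; move: {2}(wt B) (leqnn (wt B)) => m; elim: m B => [|m IH] B.
  move=> wt0 BX Bp; apply: Hdc => // w k wB wk; apply/negPn/negP=> wS.
  by have := wt_comp wB wk wS; rewrite leqn0 in wt0; rewrite (eqP wt0).
move=> wtm BX Bp.
have [[w k] /andP[wB /andP[wk wS]]|] :=
  pickP (fun p : word n * 'I_n => (p.1 \in B) && ((p.1 p.2 == Some true) && (shift p.2 p.1 \notin B))).
  rewrite -(card_comp k B); apply: IH; last exact: comp_pw4.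
    by rewrite -ltnS; apply: leq_trans wtm; apply: wt_comp wB (eqP wk) wS.
  exact: comp_Xn.
move=> none; apply: Hdc => // w k wB wk; apply/negPn/negP=> wS.
by have := none (w, k); rewrite /= wB wk eqxx wS.
Qed.

End Compression.

Section DC.
Variable n' : nat.
Local Notation n := n'.+1.
Implicit Types (B : {set word n}) (u v w : word n).

Definition star w : 'I_n := odflt ord0 [pick k | w k == None].

Lemma nonesE w : w \in Xn n -> nones w = [set star w].
Proof.
rewrite inE => /cards1P[s Es].
have sN : w s == None.
  have : s \in [set k | w k == None] by rewrite Es set11.
  by rewrite inE.
suff -> : star w = s by rewrite /nones Es.
rewrite /star; case: pickP => [k kN|/(_ s)] /=; last by rewrite sN.
have : k \in [set k | w k == None] by rewrite inE.
by rewrite Es inE => /eqP.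
Qed.

Lemma starE w k : w \in Xn n -> (w k == None) = (k == star w).
Proof. by move/nonesE/setP/(_ k); rewrite !inE. Qed.

Lemma star_trs w : w \in Xn n -> star w \notin trs w.
Proof. by move=> wX; rewrite inE; move: (starE (star w) wX); rewrite eqxx => /eqP ->. Qed.

Lemma XnE w k : w \in Xn n -> w k = if k == star w then None else Some (k \in trs w).
Proof.
move=> wX; rewrite -(starE k wX) inE.
by case: (w k) => [[]|].
Qed.

Lemma Xn_inj u v : u \in Xn n -> v \in Xn n -> star u = star v -> trs u = trs v -> u = v.
Proof. by move=> uX vX es et; apply/ffunP=> k; rewrite (XnE k uX) (XnE k vX) es et. Qed.

Definition lower w (Y : {set 'I_n}) : word n :=
  [ffun x => if (w x == Some true) && (x \notin Y) then Some false else w x].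

Lemma trs_lower w Y : trs (lower w Y) = trs w :&: Y.
Proof.
apply/setP=> x; rewrite !inE /lower ffunE.
by case: (w x) => [[]|] /=; case: (x \in Y).
Qed.

Lemma nones_lower w Y : nones (lower w Y) = nones w.
Proof.
apply/setP=> x; rewrite !inE /lower ffunE.
by case: (w x) => [[]|] /=; case: (x \in Y).
Qed.

Lemma lower_Xn w Y : w \in Xn n -> lower w Y \in Xn n.
Proof. by rewrite !inE; have := nones_lower w Y; rewrite /nones => ->. Qed.

Lemma star_lower w Y : w \in Xn n -> star (lower w Y) = star w.
Proof.
move=> wX; have := nonesE (lower_Xn Y wX); rewrite nones_lower nonesE //.
by move/setP/(_ (star w)); rewrite !inE eqxx => /esym/eqP.
Qed.

Lemma lower_in B w Y : dclosed B -> w \in B -> lower w Y \in B.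
Proof.
move=> dB; move: {2}#|trs w :\: Y| (leqnn #|trs w :\: Y|) => m.
elim: m w => [|m IH] w.
  rewrite leqn0 cards_eq0 => /eqP E wB.
  suff -> : lower w Y = w by [].
  apply/ffunP=> x; rewrite /lower ffunE; case: (w x =P Some true) => //= wx.
  have : x \notin trs w :\: Y by rewrite E inE.
  by rewrite !inE wx eqxx andbT negbK => ->.
move=> Hm wB; case: (set_0Vmem (trs w :\: Y)) => [E|[k]].
  by apply: IH => //; rewrite E cards0.
rewrite !inE => /andP[kY /eqP wk].
have -> : lower w Y = lower (shift k w) Y.
  apply/ffunP=> x; rewrite /lower /shift !ffunE.
  by case: (x =P k) => [->|] /=; rewrite ?wk ?(negbTE kY).
apply: IH; last exact: dB.
rewrite trs_shift -ltnS; apply: leq_trans Hm; apply: proper_card.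
rewrite properE; apply/andP; split.
  by apply/subsetP=> x; rewrite !inE => /andP[-> /andP[_ ->]].
by apply/subsetPn; exists k; rewrite !inE ?eqxx // kY wk eqxx.
Qed.

Lemma keyU B u v : B \subset Xn n -> pw4 B -> dclosed B -> u \in B -> v \in B ->
  #|trs u :|: trs v :|: (if star u == star v then set0 else [set star u; star v])| <= 4.
Proof.
move=> /subsetP BX Bp dB uB vB.
have uX := BX _ uB; have vX := BX _ vB.
set v' := lower v (~: trs u).
have v'B : v' \in B by apply: lower_in.
have v'X := lower_Xn (~: trs u) vX.
apply: leq_trans (Bp _ _ uB v'B); apply: subset_leq_card; apply/subsetP=> x.
move=> Hx; rewrite inE (XnE x uX) (XnE x v'X) star_lower // trs_lower.
have su := star_trs uX; have sv := star_trs vX.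
case: (x =P star u) => [xu|xu]; case: (x =P star v) => [xv|xv] //.
- have xtu : x \notin trs u by rewrite xu.
  have xtv : x \notin trs v by rewrite xv.
  by move: Hx; rewrite -xu -xv eqxx !in_setU in_set0 (negbTE xtu) (negbTE xtv).
- move: Hx; rewrite !in_setU; case: ifP => _; rewrite ?in_set0 ?in_set2 ?(introF eqP xu) ?(introF eqP xv) ?orbF.
  + by rewrite in_setI in_setC; case: (x \in trs u); case: (x \in trs v).
  + by rewrite in_setI in_setC; case: (x \in trs u); case: (x \in trs v).
Qed.

End DC.

Section Counting.
Variable T : finType.
Implicit Types (A X Y : {set T}).

Lemma le1_pick Y : #|Y| <= 1 -> Y = if [pick x in Y] is Some x then [set x] else set0.
Proof.
move=> Y1; case: pickP => [x xY|none].
  apply/eqP; rewrite eq_sym eqEcard sub1set xY cards1 /=; exact: Y1.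
by apply/setP=> x; rewrite inE; have := none x; rewrite /= => ->.
Qed.

Lemma sub_k A k : k <= #|A| -> exists X, X \subset A /\ #|X| = k.
Proof.
move/card_geqP=> [s [us ss sA]]; exists [set x in s]; split.
  by apply/subsetP=> x; rewrite inE => /sA.
by rewrite cardsE; move/card_uniqP: us => ->.
Qed.

Lemma card_le1 (j : T) A : j \notin A ->
  #|[set Y : {set T} | (Y \subset A) && (#|Y| <= 1)]| <= #|A|.+1.
Proof.
move=> jA.
pose f (Y : {set T}) := odflt j [pick x in Y].
have inj : {in [set Y : {set T} | (Y \subset A) && (#|Y| <= 1)] &, injective f}.
  move=> Y Y'; rewrite !inE => /andP[YA Y1] /andP[Y'A Y'1] E.
  rewrite (le1_pick Y1) (le1_pick Y'1); move: E; rewrite /f.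
  case: pickP => [x xY|nY]; case: pickP => [x' xY'|nY'] //= E.
  - by rewrite E.
  - by move: (subsetP YA _ xY); rewrite E (negbTE jA).
  - by move: (subsetP Y'A _ xY'); rewrite -E (negbTE jA).
rewrite -(card_in_imset inj).
apply: (leq_trans (subset_leq_card (_ : _ \subset j |: A))).
  apply/subsetP=> y /imsetP[Y]; rewrite inE => /andP[YA _] ->.
  rewrite /f; case: pickP => [x xY|_] /=; rewrite !inE ?eqxx //.
  by rewrite (subsetP YA _ xY) orbT.
by rewrite cardsU1 jA.
Qed.

Lemma card_out1 A :
  #|[set Y : {set T} | #|Y :\: A| <= 1]| <= 2 ^ #|A| * #|T|.+1.
Proof.
pose f (Y : {set T}) := (Y :&: A, [pick x in Y :\: A]).
have inj : {in [set Y : {set T} | #|Y :\: A| <= 1] &, injective f}.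
  move=> Y Y'; rewrite !inE => Y1 Y'1 [E1 E2].
  rewrite -(setID Y A) -(setID Y' A) E1 (le1_pick Y1) (le1_pick Y'1) E2 //.
rewrite -(card_in_imset inj).
apply: (leq_trans (subset_leq_card (_ : _ \subset setX (powerset A) setT))).
  by apply/subsetP=> y /imsetP[Y _ ->]; rewrite !inE subsetIr.
by rewrite cardsX card_powerset cardsT card_option.
Qed.

Lemma card_le2 : #|[set Y : {set T} | #|Y| <= 2]| <= 'C(#|T|, 0) + 'C(#|T|, 1) + 'C(#|T|, 2).
Proof.
rewrite -!card_draws.
have -> : [set Y : {set T} | #|Y| <= 2] =
  [set Y : {set T} | #|Y| == 0] :|: [set Y : {set T} | #|Y| == 1] :|: [set Y : {set T} | #|Y| == 2].
  apply/setP=> Y; rewrite !inE; case: #|Y| => [|[|[|k]]] //.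
by apply: (leq_trans (leq_card_setU _ _)); rewrite leq_add2r; apply: leq_card_setU.
Qed.

Lemma card_R (j : T) A : j \in A -> #|A| = 3 ->
  #|[set Y : {set T} | [&& j \notin Y, #|Y| <= 2 & #|Y :\: A| <= 1]]| <= 4 + 3 * (#|T| - 3).
Proof.
move=> jA A3.
set S := [set Y : {set T} | _].
have -> : S = (S :&: powerset (A :\ j)) :|: (S :\: powerset (A :\ j)) by rewrite setID.
apply: (leq_trans (leq_card_setU _ _)); apply: leq_add.
  have e2 : #|A :\ j| = 2 by move: (cardsD1 j A); rewrite jA A3 => -[].
  by apply: (leq_trans (subset_leq_card (subsetIr _ _))); rewrite card_powerset e2.
pose f (Y : {set T}) := (odflt j [pick x in Y :\: A], odflt j [pick x in Y :&: A]).
have key Y : Y \in S :\: powerset (A :\ j) ->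
   [/\ #|Y :\: A| = 1, #|Y :&: A| <= 1 & j \notin Y].
  rewrite !inE => /andP[nsub /and3P[jY Y2 YA]].
  have YA0 : #|Y :\: A| != 0.
    apply: contra nsub; rewrite cards_eq0 => /eqP E; apply/subsetP=> x xY.
    rewrite !inE; have : x \notin Y :\: A by rewrite E inE.
    rewrite !inE xY andbT negbK => ->; rewrite andbT.
    by apply: contraNneq jY => <-.
  have e1 : #|Y :\: A| = 1 by move: YA YA0; case: #|Y :\: A| => [|[]].
  split=> //; move: Y2; rewrite -(cardsID A Y) e1 addn1 ltnS; exact.
have inj : {in S :\: powerset (A :\ j) &, injective f}.
  move=> Y Y' /key[e1 e2 e3] /key[e1' e2' e3'] [E1 E2].
  have P1 (Z : {set T}) : #|Z :\: A| = 1 -> Z :\: A = [set odflt j [pick x in Z :\: A]].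
    move=> e; rewrite {1}(le1_pick (eq_leq e)); case: pickP => [x _|] //=.
    by move/eq_card0; rewrite e.
  have P2 (Z : {set T}) : #|Z :&: A| <= 1 -> j \notin Z ->
     Z :&: A = if odflt j [pick x in Z :&: A] == j then set0 else [set odflt j [pick x in Z :&: A]].
    move=> e jZ; rewrite {1}(le1_pick e); case: pickP => [x|] //=; last by rewrite eqxx.
    by rewrite !inE => /andP[xZ _]; case: (x =P j) => // xj; move: jZ; rewrite -xj xZ.
  rewrite -(setID Y A) -(setID Y' A) (P1 _ e1) (P1 _ e1') (P2 _ e2 e3) (P2 _ e2' e3').
  by rewrite /f /= in E1 E2; rewrite E1 E2.
rewrite -(card_in_imset inj).
apply: (leq_trans (subset_leq_card (_ : _ \subset setX (~: A) A))).
  apply/subsetP=> y /imsetP[Y /key[e1 e2 e3] ->]; rewrite !inE /f /=.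
  apply/andP; split.
    case: pickP => [x|]; first by rewrite !inE => /andP[].
    by move/eq_card0; rewrite e1.
  by case: pickP => [x|] //=; rewrite !inE => /andP[].
by rewrite cardsX cardsCs setCK A3 mulnC.
Qed.

End Counting.

Section Main.
Variable n' : nat.
Local Notation n := n'.+1.
Implicit Types (B : {set word n}) (u v w : word n).

Lemma count_star B (S : 'I_n -> {set {set 'I_n}}) : B \subset Xn n ->
  (forall w, w \in B -> trs w \in S (star w)) -> #|B| <= \sum_j #|S j|.
Proof.
move=> /subsetP BX HS.
have inj : {in B &, injective (fun w => (star w, trs w))}.
  by move=> u v uB vB [e1 e2]; exact: Xn_inj (BX _ uB) (BX _ vB) e1 e2.
rewrite -(card_in_imset inj).
apply: (leq_trans (subset_leq_card (_ : _ \subset [set p : 'I_n * {set 'I_n} | p.2 \in S p.1]))).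
  by apply/subsetP=> p /imsetP[w wB ->]; rewrite inE /=; apply: HS.
rewrite -sum1_card (eq_bigl (fun p : 'I_n * {set 'I_n} => true && (p.2 \in S p.1))); last first.
  by move=> p; rewrite inE.
rewrite -(pair_big_dep xpredT (fun j Y => Y \in S j) (fun _ _ => 1)) /=.
by apply: leq_sum => j _; rewrite sum1_card.
Qed.

Lemma sum_ind (A : {set 'I_n}) c : \sum_(j < n) (j \in A) * c = #|A| * c.
Proof.
rewrite -sum_nat_const [RHS]big_mkcond /=.
by apply: eq_bigr=> j _; case: (j \in A); rewrite ?mul1n ?mul0n.
Qed.

End Main.

Section Main2.
Variable n' : nat.
Local Notation n := n'.+1.
Implicit Types (B : {set word n}) (u v w : word n).

Lemma sum_const_n c : \sum_(j < n) c = n * c.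
Proof.
rewrite -[n in RHS](card_ord n) -cardsT -sum_ind.
by apply: eq_bigr=> j _; rewrite inE mul1n.
Qed.

Lemma card_UD (A C : {set 'I_n}) : #|A :|: C| = #|A :\: C| + #|C|.
Proof. have := cardsUI A C; have := cardsID C A; lia. Qed.

Lemma outside B u v : B \subset Xn n -> pw4 B -> dclosed B -> u \in B -> v \in B ->
  star v != star u ->
  #|trs v :|: (star u |: trs u)| <= 4 /\
  (#|trs u| = 2 -> star v \notin star u |: trs u -> trs v \subset star u |: trs u).
Proof.
move=> BX Bp dB uB vB ne.
have := keyU BX Bp dB vB uB; rewrite (negbTE ne).
set U := _ :|: _ => HU.
have sub : trs v :|: (star u |: trs u) \subset U.
  apply/subsetP=> x; rewrite !inE.
  by case/or3P=> ->; rewrite ?orbT.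
split; first exact: leq_trans (subset_leq_card sub) HU.
move=> tu2 svT.
have vX := subsetP BX _ vB; have uX := subsetP BX _ uB.
have c3 : #|star u |: trs u| = 3 by rewrite cardsU1 (star_trs uX) tu2.
have E : star v |: (star u |: trs u) == U.
  rewrite eqEcard; apply/andP; split.
    apply/subsetP=> x; rewrite !inE.
    by case/or3P=> ->; rewrite ?orbT.
  by rewrite cardsU1 svT c3.
apply/subsetP=> x xv.
have : x \in U by rewrite /U !in_setU xv.
rewrite -(eqP E) in_setU1; case/orP=> // /eqP xs.
by move: (star_trs vX); rewrite -xs xv.
Qed.

Theorem dc_bound B : 16 <= n -> B \subset Xn n -> pw4 B -> dclosed B -> #|B| <= n ^ 2.
Proof.
move=> n16 BXs Bp dB.
have BX : forall w, w \in B -> w \in Xn n by apply/subsetP.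
have K := keyU BXs Bp dB.
have OUT := outside BXs Bp dB.
case: (pickP (fun w => (w \in B) && (1 < #|trs w|))) => [w0 /andP[w0B w0c] | H1]; last first.
  apply: (leq_trans (count_star (S := fun j => [set Y : {set 'I_n} | (Y \subset [set~ j]) && (#|Y| <= 1)]) BXs _)).
    move=> w wB; rewrite inE; apply/andP; split.
      apply/subsetP=> x xw; rewrite !inE; apply: contraTneq xw => ->; exact: star_trs (BX _ wB).
    by have := H1 w; rewrite wB /= => /negbT; rewrite -leqNgt.
  apply: (@leq_trans (\sum_(j < n) n)).
    apply: leq_sum=> j _; apply: leq_trans (card_le1 (j := j) _) _; first by rewrite !inE eqxx.
    by rewrite cardsC1 card_ord.
  by rewrite sum_const_n mulnn.
case: (pickP (fun w => (w \in B) && (2 < #|trs w|))) => [w1 /andP[w1B w1c] | H2].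
  have [X0 [X0s X03]] := sub_k w1c.
  set w2 := lower w1 X0.
  have w2B : w2 \in B by apply: lower_in.
  have tw2 : trs w2 = X0 by rewrite trs_lower; apply/setIidPr.
  set t := star w2.
  have tX0 : t \notin X0 by rewrite -tw2; apply: star_trs; apply: BX.
  set Z0 := t |: X0.
  have Z04 : #|Z0| = 4 by rewrite /Z0 cardsU1 tX0 X03.
  pose S j := if j == t then [set Y : {set 'I_n} | #|Y :\: X0| <= 1]
              else if j \in Z0 then powerset Z0 else set0.
  apply: (leq_trans (count_star (S := S) BXs _)).
    move=> v vB; rewrite /S; case: (star v =P t) => [st|nst].
      have := K _ _ vB w2B; rewrite st eqxx setU0 tw2 inE card_UD.
      by rewrite X03; lia.
    have := K _ _ vB w2B; rewrite -/t (introF eqP nst) tw2 => h.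
    have E : Z0 == trs v :|: X0 :|: [set star v; t].
      rewrite eqEcard Z04 h andbT; apply/subsetP=> x; rewrite !inE.
      by case/orP=> ->; rewrite ?orbT.
    have svZ : star v \in Z0 by rewrite (eqP E) !inE eqxx !orbT.
    by rewrite svZ inE; apply/subsetP=> x xv; rewrite (eqP E) !in_setU xv.
  apply: (@leq_trans (\sum_(j < n) ((j \in [set t]) * (2 ^ 3 * n.+1) + (j \in Z0) * 16))).
    apply: leq_sum=> j _; rewrite /S.
    case: (j =P t) => [->|jt].
      rewrite in_set1 eqxx mul1n; apply: leq_trans (leq_addr _ _).
      by have := card_out1 X0; rewrite X03 card_ord.
    rewrite in_set1 (introF eqP jt) mul0n add0n.
    case: (j \in Z0); last by rewrite cards0.
    by rewrite card_powerset Z04.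
  rewrite big_split /= !sum_ind cards1 Z04; nia.
have le2 : forall v, v \in B -> #|trs v| <= 2.
  by move=> v vB; have := H2 v; rewrite vB /= => /negbT; rewrite -leqNgt.
have w02 : #|trs w0| = 2 by apply/eqP; rewrite eqn_leq le2.
case: (pickP (fun p : word n * word n => [&& p.1 \in B, p.2 \in B, #|trs p.1| == 2,
          #|trs p.2| == 2 & star p.1 != star p.2])) => [[u1 u2] /and5P[/= u1B u2B /eqP u12 /eqP u22 ne12] | H3].
  set t1 := star u1; set t2 := star u2.
  set T1 := t1 |: trs u1; set T2 := t2 |: trs u2.
  have T13 : #|T1| = 3 by rewrite /T1 cardsU1 (star_trs (BX _ u1B)) u12.
  have T23 : #|T2| = 3 by rewrite /T2 cardsU1 (star_trs (BX _ u2B)) u22.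
  pose R j T := [set Y : {set 'I_n} | [&& j \notin Y, #|Y| <= 2 & #|Y :\: T| <= 1]].
  pose S j := if j \notin T1 then powerset T1 else if j \notin T2 then powerset T2
              else if j != t1 then R j T1 else R j T2.
  apply: (leq_trans (count_star (S := S) BXs _)).
    move=> v vB; rewrite /S.
    have vX := BX _ vB.
    case: ifP => [svT1|/negbFE svT1].
      have ne : star v != t1 by apply: contraNneq svT1 => ->; rewrite setU11.
      by rewrite inE; apply: (proj2 (OUT _ _ u1B vB ne)).
    case: ifP => [svT2|/negbFE svT2].
      have ne : star v != t2 by apply: contraNneq svT2 => ->; rewrite setU11.
      by rewrite inE; apply: (proj2 (OUT _ _ u2B vB ne)).
    case: ifP => [ne|/negbFE/eqP e].
      rewrite inE (star_trs vX) le2 //=; have := proj1 (OUT _ _ u1B vB ne).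
      by rewrite card_UD T13 addn3.
    have ne : star v != t2 by rewrite e.
    rewrite inE (star_trs vX) le2 //=; have := proj1 (OUT _ _ u2B vB ne).
    by rewrite card_UD T23 addn3.
  apply: (@leq_trans (\sum_(j < n) ((j \in T1 :&: T2) * (3 * n - 13) + 8))).
    apply: leq_sum=> j _; rewrite /S.
    case: ifP => [jT1|/negbFE jT1] /=.
      by rewrite card_powerset T13 leq_addl.
    case: ifP => [jT2|/negbFE jT2] /=.
      by rewrite card_powerset T23 leq_addl.
    rewrite in_setI jT1 jT2 /= mul1n.
    case: ifP => _.
      by apply: leq_trans (card_R jT1 T13) _; rewrite card_ord; lia.
    by apply: leq_trans (card_R jT2 T23) _; rewrite card_ord; lia.
  rewrite big_split /= sum_ind sum_const_n.
  have hc : #|T1 :&: T2| <= 3 by rewrite -T13; apply: subset_leq_card; apply: subsetIl.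
  apply: (@leq_trans (3 * (3 * n - 13) + n * 8)).
    by rewrite leq_add2r leq_mul2r hc orbT.
  nia.
set t := star w0; set T := t |: trs w0.
have T3 : #|T| = 3 by rewrite /T cardsU1 (star_trs (BX _ w0B)) w02.
pose S j := if j == t then [set Y : {set 'I_n} | #|Y| <= 2]
            else if j \in T then [set Y : {set 'I_n} | (Y \subset [set~ j]) && (#|Y| <= 1)]
            else [set Y : {set 'I_n} | (Y \subset T) && (#|Y| <= 1)].
apply: (leq_trans (count_star (S := S) BXs _)).
  move=> v vB; rewrite /S; have vX := BX _ vB.
  case: (star v =P t) => [_|nst]; first by rewrite inE le2.
  have v1 : #|trs v| <= 1.
    rewrite leqNgt; apply/negP=> v2.
    have := H3 (w0, v); rewrite /= w0B vB w02 eqxx /=.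
    have -> : #|trs v| == 2 by rewrite eqn_leq le2.
    by rewrite eq_sym (introF eqP nst).
  have ne : star v != t by apply/eqP.
  case: ifP => [svT|svT].
    rewrite inE v1 andbT; apply/subsetP=> x xv; rewrite !inE.
    by apply: contraTneq xv => ->; exact: star_trs.
  rewrite inE v1 andbT; apply: (proj2 (OUT _ _ w0B vB ne)) => //.
  by rewrite svT.
apply: (@leq_trans (\sum_(j < n) ((j \in [set t]) * ('C(n, 0) + 'C(n, 1) + 'C(n, 2)) + (j \in T) * n + 4))).
  apply: leq_sum=> j _; rewrite /S.
  case: (j =P t) => [->|jt].
    rewrite in_set1 eqxx mul1n -addnA; apply: leq_trans (leq_addr _ _).
    by apply: leq_trans (card_le2 _) _; rewrite card_ord.
  rewrite in_set1 (introF eqP jt) mul0n add0n.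
  case: ifP => [jT|jT].
    rewrite mul1n; apply: leq_trans (card_le1 (j := j) _) _; first by rewrite !inE eqxx.
    by rewrite cardsC1 card_ord leq_addr.
  by rewrite mul0n add0n; apply: leq_trans (card_le1 (j := j) _) _; rewrite ?jT // T3.
rewrite !big_split /= !sum_ind sum_const_n cards1 T3 bin0 bin1 bin2 -divn2.
nia.
Qed.

End Main2.

Import GRing.Theory.

Section GF8.
Local Open Scope ring_scope.
Variable F : finFieldType.
Hypothesis ch2 : 2%N \in [pchar F].
Hypothesis cardF : #|F| = 8%N.

Lemma add_eq0 (a b : F) : a + b = 0 -> a = b.
Proof. by move/eqP; rewrite addr_eq0 oppr_pchar2 // => /eqP. Qed.

Lemma x7 (x : F) : x != 0 -> x ^+ 7 = 1.
Proof.
move=> x0; have := expf_card x; rewrite cardF exprS => /eqP.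
by rewrite -[X in _ == X]mulr1 (inj_eq (mulfI x0)) => /eqP.
Qed.

Lemma cube_inj (x y : F) : x ^+ 3 = y ^+ 3 -> x = y.
Proof.
move=> E.
case: (x =P 0) => [x0|/eqP x0].
  by move: E; rewrite x0 expr0n /= => /esym/eqP; rewrite expf_eq0 /= => /eqP.
case: (y =P 0) => [y0|/eqP y0].
  by move: E; rewrite y0 expr0n /= => /eqP; rewrite expf_eq0 /= (negbTE x0).
have ex : x = (x ^+ 3 ^+ 2)^-1.
  have nz : x ^+ 3 ^+ 2 != 0 by rewrite !expf_neq0.
  by rewrite -{1}(mulKf nz x) -exprM -exprSr x7 // mulr1.
have ey : y = (y ^+ 3 ^+ 2)^-1.
  have nz : y ^+ 3 ^+ 2 != 0 by rewrite !expf_neq0.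
  by rewrite -{1}(mulKf nz y) -exprM -exprSr x7 // mulr1.
by rewrite ex ey E.
Qed.

Lemma three1 : 3%:R = 1 :> F.
Proof. by rewrite -[3%N]/(1 + 2)%N natrD (GRing.pcharf0 ch2) addr0. Qed.

Lemma bch3 (a b c d : F) : a != b -> b != c -> c != a ->
  a + b + c + d = 0 -> a ^+ 3 + b ^+ 3 + c ^+ 3 + d ^+ 3 = 0 -> False.
Proof.
move=> ab bc ca E1 E3.
set s1 := a + b + c + d.
have id : a ^+ 3 + b ^+ 3 + c ^+ 3 + d ^+ 3 + 3%:R * ((a + b) * (b + c) * (c + a))
   = s1 * (s1 ^+ 2 - 3%:R * s1 * (a + b + c) + 3%:R * (a + b + c) ^+ 2).
  by rewrite /s1; ring.
move: id; rewrite E3 /s1 E1 !mul0r add0r three1 mul1r => /eqP; rewrite !mulf_eq0.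
case/orP=> [/orP[]|] /eqP /add_eq0 e.
- by move: ab; rewrite e eqxx.
- by move: bc; rewrite e eqxx.
- by move: ca; rewrite e eqxx.
Qed.

End GF8.

Section Col8.
Local Open Scope ring_scope.
Variable F : finFieldType.
Hypothesis ch2 : 2%N \in [pchar F].
Hypothesis cardF : #|F| = 8%N.

Definition e8 (i : 'I_8) : F := enum_val (cast_ord (esym cardF) i).
Lemma e8_inj : injective e8.
Proof. by move=> i j /enum_val_inj /cast_ord_inj. Qed.

Lemma sum_sd (f : 'I_8 -> F) (A B : {set 'I_8}) :
  \sum_(k in A) f k + \sum_(k in B) f k = \sum_(k in [set k | (k \in A) != (k \in B)]) f k.
Proof.
rewrite !(big_mkcond (fun k => k \in _)) -big_split /=.
apply: eq_bigr=> k _; rewrite inE.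
by case: (k \in A); case: (k \in B); rewrite ?addr0 ?add0r ?addrr_pchar2.
Qed.

Lemma two0 : 2%:R = 0 :> F.
Proof. exact: (GRing.pcharf0 ch2). Qed.

Lemma sum2_eq (a b c d : F) : a + c = b + d -> a + b = c + d.
Proof.
move=> h; apply/eqP; rewrite -subr_eq0.
have -> : a + b - (c + d) = (a + c - (b + d)) + 2%:R * (b - c) by ring.
by rewrite h subrr two0 mul0r addr0.
Qed.

Lemma sum_set2 (f : 'I_8 -> F) r s : r != s -> \sum_(k in [set r; s]) f k = f r + f s.
Proof. by move=> rs; rewrite big_setU1 ?inE // big_set1. Qed.

Lemma small_even (S : {set 'I_8}) : (#|S| <= 5)%N -> ~~ odd #|S| ->
  \sum_(k in S) e8 k = 0 -> \sum_(k in S) e8 k ^+ 3 = 0 -> S = set0.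
Proof.
move=> S5 ev E1 E3.
have H : [|| #|S| == 0, #|S| == 2 | #|S| == 4]%N.
  by move: S5 ev; case: #|S| => [|[|[|[|[|[|]]]]]].
move: E1 E3; case/or3P: H => [/eqP/cards0_eq -> //|/cards2P[r [s [rs ->]]]|S4].
  by rewrite (sum_set2 e8) // => /(add_eq0 ch2) /e8_inj rs'; move: rs; rewrite rs' eqxx.
rewrite -!big_enum.
have := enum_uniq S; have : size (enum S) = 4%N by rewrite -cardE (eqP S4).
case: (enum S) => [|a [|b [|c [|d [|]]]]] //= _.
move=> U.
have ab : a != b by apply: contraTneq U => ->; rewrite /= !inE eqxx /= ?orbT ?andbF.
have bc : b != c by apply: contraTneq U => ->; rewrite /= !inE eqxx /= ?orbT ?andbF.
have ca : c != a by apply: contraTneq U => ->; rewrite /= !inE eqxx /= ?orbT ?andbF.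
rewrite !big_cons !big_nil !addr0 !addrA => h1 h3.
case: (bch3 ch2 _ _ _ h1 h3).
- by rewrite (inj_eq e8_inj).
- by rewrite (inj_eq e8_inj).
- by rewrite (inj_eq e8_inj).
Qed.


Lemma cross (R : {set 'I_8}) (i j : 'I_8) (bi bj : bool) : i != j -> i \notin R -> j \notin R ->
  (#|R| <= 2)%N -> ~~ odd (#|R| + bi + bj) ->
  \sum_(k in R) e8 k + (if bi then e8 i else 0) + (if bj then e8 j else 0) = 0 ->
  \sum_(k in R) e8 k ^+ 3 + (if bi then e8 i ^+ 3 else 0) + (if bj then e8 j ^+ 3 else 0)
    = e8 i ^+ 3 + e8 j ^+ 3 -> False.
Proof.
move=> ij iR jR R2 par h1 h3.
have ninj (a b : 'I_8) : a != b -> e8 a = e8 b -> False.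
  by move=> ab /e8_inj eab; move: ab; rewrite eab eqxx.
have H : [|| #|R| == 0, #|R| == 1 | #|R| == 2]%N by move: R2; case: #|R| => [|[|[|]]].
case/or3P: H.
- move/eqP/cards0_eq => R0; move: par h1 h3; rewrite R0 cards0 !big_set0 !add0r.
  case: bi; case: bj => //= _.
  + by move=> /(add_eq0 ch2) h _; exact: ninj ij h.
  + by rewrite !add0r => _ /esym /(add_eq0 ch2) /(cube_inj cardF) h; exact: ninj ij h.
- move/cards1P=> [r R1]; move: par h1 h3 iR jR; rewrite R1 cards1 !big_set1 !inE.
  case: bi; case: bj => //= _.
  + by rewrite addr0 => /(add_eq0 ch2) eri _ ir _; exact: ninj ir (esym eri).
  + by rewrite addr0 => /(add_eq0 ch2) erj _ _ jr; exact: ninj jr (esym erj).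
- move/cards2P=> [r [s [rs R2']]]; move: par h1 h3 iR jR; rewrite R2' cards2 rs !sum_set2 //.
  case: bi; case: bj => //= _.
  + move=> _ /eqP; rewrite -addrA -subr_eq0 addrK => /eqP /(add_eq0 ch2) /(cube_inj cardF) h _ _.
    exact: ninj rs h.
  + by rewrite !addr0 => /(add_eq0 ch2) h _ _ _; exact: ninj rs h.
Qed.


Definition A8 (w : word 8) : {set 'I_8} :=
  if odd #|trs w| then star w |: trs w else trs w.
Definition col (w : word 8) : F * F :=
  (\sum_(k in A8 w) e8 k, \sum_(k in A8 w) e8 k ^+ 3 + e8 (star w) ^+ 3).

Lemma A8_even w : w \in Xn 8 -> ~~ odd #|A8 w|.
Proof.
move=> wX; rewrite /A8; case: ifP => h; last by rewrite h.
by rewrite cardsU1 (star_trs wX) /= h.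
Qed.

Lemma A8_mem w k : w \in Xn 8 -> k != star w -> (k \in A8 w) = (k \in trs w).
Proof. by move=> wX ks; rewrite /A8; case: ifP => _ //; rewrite in_setU1 (negbTE ks). Qed.

Lemma trs_A8 w : w \in Xn 8 -> trs w = A8 w :\ star w.
Proof.
move=> wX; apply/setP=> k; rewrite in_setD1; case: (k =P star w) => [->|/eqP ks] /=.
  exact/negbTE/star_trs.
by rewrite A8_mem.
Qed.

Lemma odd_sd (A B : {set 'I_8}) :
  odd #|[set k | (k \in A) != (k \in B)]| = odd #|A| (+) odd #|B|.
Proof.
have E : [set k | (k \in A) != (k \in B)] = (A :|: B) :\: (A :&: B).
  by apply/setP=> k; rewrite !inE; case: (k \in A); case: (k \in B).
have e1 := cardsUI A B.
have e2 : #|(A :|: B) :\: (A :&: B)| = (#|A :|: B| - #|A :&: B|)%N.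
  by apply: cardsDS; apply/subsetP=> k; rewrite !inE => /andP[->].
have e3 : (#|A :&: B| <= #|A :|: B|)%N by apply: subset_leq_card; apply/subsetP=> k; rewrite !inE => /andP[->].
have : (#|A| + #|B| = #|[set k | (k \in A) != (k \in B)]| + (#|A :&: B|).*2)%N.
  by rewrite E e2 -addnn; lia.
by move/(congr1 odd); rewrite !oddD odd_double addbF => <-.
Qed.

Lemma sumD1' (f : 'I_8 -> F) (A : {set 'I_8}) a :
  \sum_(k in A) f k = (if a \in A then f a else 0) + \sum_(k in A :\ a) f k.
Proof.
case: ifP => aA; first by rewrite (big_setD1 a aA).
rewrite add0r; apply: eq_bigl => k; rewrite !inE; case: (k =P a) => // ->.
by rewrite aA.
Qed.

Lemma split_ij (f : 'I_8 -> F) (z : {set 'I_8}) (i j : 'I_8) : i != j ->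
  \sum_(k in z) f k = \sum_(k in z :\: [set i; j]) f k
     + (if i \in z then f i else 0) + (if j \in z then f j else 0).
Proof.
move=> ij; rewrite (sumD1' _ z i) (sumD1' _ (z :\ i) j) in_setD1 eq_sym ij /=.
have -> : (z :\ i) :\ j = z :\: [set i; j].
  by apply/setP=> k; rewrite !inE; case: (k == i); case: (k == j).
by rewrite addrA addrC addrA.
Qed.


Lemma col_inj u v : u \in Xn 8 -> v \in Xn 8 -> col u = col v -> (hdist u v <= 4)%N -> u = v.
Proof.
move=> uX vX [E1 E3] hd.
set i := star u; set j := star v.
set z := [set k | (k \in A8 u) != (k \in A8 v)].
have Z1 : \sum_(k in z) e8 k = 0 by rewrite -sum_sd E1 addrr_pchar2.
have Z3 : \sum_(k in z) e8 k ^+ 3 = e8 i ^+ 3 + e8 j ^+ 3 by rewrite -sum_sd; apply: sum2_eq.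
have zev : ~~ odd #|z| by rewrite odd_sd (negbTE (A8_even uX)) (negbTE (A8_even vX)).
have Dk k : k != i -> k != j -> (k \in z) = (u k != v k).
  move=> ki kj; rewrite inE (XnE k uX) (XnE k vX) -/i -/j (negbTE ki) (negbTE kj).
  by rewrite (A8_mem uX ki) (A8_mem vX kj); case: (k \in trs u); case: (k \in trs v).
case: (i =P j) => [eij|/eqP nij].
  have zsub : z :\ i \subset [set k | u k != v k].
    apply/subsetP=> k; rewrite in_setD1 => /andP[ki kz]; rewrite inE -Dk //.
    by rewrite -eij.
  have z5 : (#|z| <= 5)%N.
    rewrite (cardsD1 i z); apply: (@leq_add _ _ 1 4); first by case: (i \in z).
    exact: leq_trans (subset_leq_card zsub) hd.
  have z0 : z = set0 by apply: small_even => //; rewrite Z3 eij addrr_pchar2.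
  have eA : A8 u = A8 v.
    apply/setP=> k; have : k \notin z by rewrite z0 in_set0.
    by rewrite inE negbK => /eqP.
  by apply: Xn_inj => //; rewrite (trs_A8 uX) (trs_A8 vX) eA -/i -/j eij.
set R := z :\: [set i; j].
have Rsub : R :|: [set i; j] \subset [set k | u k != v k].
  apply/subsetP=> k; rewrite in_setU in_setD => /orP[/andP[kij kz]|kij].
    by move: kij; rewrite !inE negb_or => /andP[ki kj]; rewrite -Dk.
  have nji : j != i by rewrite eq_sym.
  rewrite inE; move: kij; rewrite !inE => /orP[]/eqP->;
  by rewrite (XnE _ uX) (XnE _ vX) -/i -/j eqxx ?(negbTE nij) ?(negbTE nji).
have R2 : (#|R| <= 2)%N.
  have := leq_trans (subset_leq_card Rsub) hd.
  have := cardsUI R [set i; j].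
  have -> : R :&: [set i; j] = set0.
    by apply/setP=> k; rewrite !inE; case: (k == i); case: (k == j); rewrite ?andbF.
  by rewrite cards0 addn0 cards2 nij => ->; rewrite addn2.
have iR : i \notin R by rewrite !inE eqxx.
have jR : j \notin R by rewrite !inE eqxx orbT.
have par : ~~ odd (#|R| + (i \in z) + (j \in z))%N.
  move: zev; rewrite (cardsD1 i z) (cardsD1 j (z :\ i)) in_setD1 eq_sym nij /=.
  have -> : (z :\ i) :\ j = R.
    by apply/setP=> k; rewrite !inE; case: (k == i); case: (k == j).
  by have -> : (#|R| + (i \in z) + (j \in z) = (i \in z) + ((j \in z) + #|R|))%N by lia.
exfalso; apply: (cross (R := R) (i := i) (j := j) (bi := i \in z) (bj := j \in z)) => //.
  by rewrite -(split_ij e8 z nij).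
by rewrite -(split_ij (fun k => e8 k ^+ 3) z nij).
Qed.

Lemma bound8F (B : {set word 8}) : B \subset Xn 8 -> pw4 B -> (#|B| <= 8 ^ 2)%N.
Proof.
move=> /subsetP BX Bp.
have inj : {in B &, injective col}.
  by move=> u v uB vB E; apply: col_inj => //; [apply: BX..| apply: Bp].
rewrite -(card_in_imset inj).
apply: leq_trans (subset_leq_card (subsetT _)) _.
by rewrite cardsT card_prod cardF.
Qed.

End Col8.

Lemma bound8 (B : {set word 8}) : B \subset Xn 8 -> pw4 B -> #|B| <= 8 ^ 2.
Proof.
have [Fm ch cF] := @pPrimePowerField 2 3 (isT : prime 2) (isT : 0 < 3).
have cF8 : #|Fm| = 8 by rewrite cF.
exact: (bound8F ch cF8).
Qed.

Theorem proposition1 (m n : nat) :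
  n = 2 ^ m -> 8 <= n ->
  (forall B : {set word n}, B \subset Xn n ->
     (forall u v, u \in B -> v \in B -> hdist u v <= 4) ->
     #|B| <= n ^ 2)
  /\
  (exists B : {set word n}, [/\ B \subset Xn n, diam B = 4 & #|B| = n ^ 2]).
Proof.
move=> nm n8; split; last first.
  have n4 : 4 <= n by apply: leq_trans n8.
  by exists (B0 n); split; [exact: B0_sub | exact: B0_diam | exact: B0_card].
move=> B BX Bp.
case: (n =P 8) => [e8n|ne8].
  by clear nm; subst n; apply: bound8.
have n16 : 16 <= n.
  rewrite nm; have : 3 < m.
    rewrite ltnNge; apply/negP=> m3; apply: ne8; apply/eqP; rewrite eqn_leq n8 andbT nm.
    by rewrite -[8]/(2 ^ 3) leq_exp2l.
  by move=> m4; rewrite -[16]/(2 ^ 4) leq_exp2l.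
case: n nm n8 B BX Bp ne8 n16 => [//|n'] nm n8 B BX Bp ne8 n16.
exact: (reduce (@dc_bound n' ^~ n16) BX Bp).
Qed.
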